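(* Let $C$ be a cycle graph. If $u$ and $v$ are non-adjacent vertices of $C$, then there exists a u-switch $\tau$ over $C$ such that $uv\in E(\tau(C))$.
   Context: Graphs are finite, simple, undirected, labeled. A unicyclic graph is a connected graph with exactly one cycle. For vertices $a,b,c,d$, $A=\binom{a\ b}{c\ d}$ is interchangeable in $G$ if $ab,cd\in E(G)$, $\{a,b\}\cap\{c,d\}=\varnothing$, $ac,bd\notin E(G)$; the 2-switch $\tau_A$ sends $G$ to $G-ab-cd+ac+bd$ if $A$ is interchangeable and to $G$ otherwise (trivial). A nontrivial 2-switch $\tau$ over a unicyclic $U$ is a u-switch if $\tau(U)$ is unicyclic. *)

(* Defs.v *)
(* Graphs on a finite labeled vertex type T are represented
   by their edge sets E : {set {set T}}, each edge being a 2-element set. *)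
From mathcomp Require Import all_boot.
Set Implicit Arguments. Unset Strict Implicit. Unset Printing Implicit Defensive.

Section Graphs.
Variable T : finType.
Implicit Types (E F : {set {set T}}) (a b c d x y : T).

Definition simple_graph E : Prop := forall e, e \in E -> #|e| = 2.

Definition adj E : rel T := fun x y => [set x; y] \in E.

Definition neighbours E x : {set T} := [set y | adj E x y].
Definition degree E x : nat := #|neighbours E x|.

Definition connected_graph E : Prop := forall x y, connect (adj E) x y.

Definition covered F : {set T} := [set x | [exists e in F, x \in e]].

Definition is_cycle E F : Prop :=
  [/\ F \subset E, F != set0,
      (forall x, x \in covered F -> degree F x = 2) &
      (forall x y, x \in covered F -> y \in covered F -> connect (adj F) x y)].

Definition unicyclic E : Prop :=
  simple_graph E /\ connected_graph E /\
  exists F, is_cycle E F /\ forall F', is_cycle E F' -> F' = F.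

Definition cycle_graph E : Prop :=
  simple_graph E /\ connected_graph E /\ forall x, degree E x = 2.

Definition interchangeable E a b c d : Prop :=
  [/\ adj E a b, adj E c d,
      [disjoint [set a; b] & [set c; d]],
      ~~ adj E a c & ~~ adj E b d].

Definition switch_edges E a b c d : {set {set T}} :=
  (E :\ [set a; b] :\ [set c; d]) :|: [set [set a; c]; [set b; d]].

Definition two_switch E a b c d : {set {set T}} :=
  if [&& adj E a b, adj E c d, [disjoint [set a; b] & [set c; d]],
         ~~ adj E a c & ~~ adj E b d]
  then switch_edges E a b c d else E.

Definition u_switch E a b c d : Prop :=
  interchangeable E a b c d /\ unicyclic (two_switch E a b c d).

End Graphs.

(* Main.v *)
Require Import Defs.
From mathcomp Require Import all_boot.
Set Implicit Arguments. Unset Strict Implicit. Unset Printing Implicit Defensive.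

Section Aux.
Variable T : finType.
Implicit Types (E F : {set {set T}}) (a b c d x y : T).

Lemma adjC E x y : adj E x y = adj E y x.
Proof. by rewrite /adj setUC. Qed.

Lemma pair_eq a b c d :
  ([set a; b] == [set c; d]) = ((a == c) && (b == d)) || ((a == d) && (b == c)).
Proof.
apply/eqP/idP.
- move=> H.
  have ha : a \in [set c; d] by rewrite -H !inE eqxx.
  have hb : b \in [set c; d] by rewrite -H !inE eqxx orbT.
  have hc : c \in [set a; b] by rewrite H !inE eqxx.
  have hd : d \in [set a; b] by rewrite H !inE eqxx orbT.
  move: ha hb hc hd; rewrite !inE.
  by move=> /orP[]/eqP ea /orP[]/eqP eb /orP[]/eqP ec /orP[]/eqP ed; subst;
     rewrite ?eqxx ?orbT.
- by case/orP=> /andP [/eqP -> /eqP ->] //; rewrite setUC.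
Qed.

Lemma connect_fwd (e : rel T) (P : T -> Prop) :
  (forall x y, P x -> e x y -> P y) -> forall x y, connect e x y -> P x -> P y.
Proof.
move=> H x y /connectP [p]; elim: p x => [|z p IH] x /=; first by move=> _ ->.
by case/andP=> exz pz ly Px; apply: (IH z pz ly (H _ _ Px exz)).
Qed.

Lemma connect_bwd (e : rel T) (P : T -> Prop) y :
  (forall x z, e x z -> P z -> P x) -> P y -> forall x, connect e x y -> P x.
Proof.
move=> H Py x /connectP [p]; elim: p x => [|z p IH] x /=; first by move=> _ <-.
by case/andP=> exz pz ly; apply: (H _ _ exz (IH z pz ly)).
Qed.

Lemma cycle_unicyclic E (x0 : T) : cycle_graph E -> unicyclic E.
Proof.
case=> [sE [cE dE]]; split=> //; split=> //; exists E.
have covT : forall x, x \in covered E.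
  move=> x; rewrite inE; have : 0 < degree E x by rewrite dE.
  rewrite /degree card_gt0 => /set0Pn [y]; rewrite inE /adj => Hy.
  by apply/existsP; exists [set x; y]; rewrite Hy !inE eqxx.
split.
- split=> //.
  + have : x0 \in covered E := covT x0.
    rewrite inE => /existsP [e /andP [eE _]]; by apply/set0Pn; exists e.
- move=> F [sFE nF dF conF].
  have clos : forall x y, x \in covered F -> adj E x y -> adj F x y.
    move=> x y xF Exy.
    have sN : neighbours F x \subset neighbours E x.
      by apply/subsetP=> z; rewrite !inE /adj => /(subsetP sFE).
    have : neighbours F x == neighbours E x.
      by rewrite eqEcard sN /= -/(degree F x) -/(degree E x) dE dF.
    by move/eqP/setP/(_ y); rewrite !inE => ->.
  have adjcov : forall x y, adj F x y -> y \in covered F.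
    by move=> x y Fxy; rewrite inE; apply/existsP; exists [set x; y]; rewrite -/(adj F x y) Fxy !inE eqxx orbT.
  have covF : forall x, x \in covered F.
    case/set0Pn: nF => e eF.
    have /eqP/cards2P [x [y [_ exy]]] := sE e (subsetP sFE e eF).
    have xF : x \in covered F.
      by rewrite inE; apply/existsP; exists e; rewrite eF exy !inE eqxx.
    move=> z; apply: (connect_fwd (e := adj E) (P := fun z => z \in covered F)) (cE x z) xF.
    by move=> a b aF /(clos _ _ aF) /adjcov.
  apply/eqP; rewrite eqEsubset sFE /=; apply/subsetP => e eE.
  have /eqP/cards2P [x [y [_ exy]]] := sE e eE.
  by rewrite exy; apply: clos (covF x) _; rewrite /adj -exy.
Qed.


Lemma short_path (e : rel T) u v : connect e u v ->
  exists p, [/\ path e u p, last u p = v, uniq (u :: p) & ~~ has (e u) (behead p)].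
Proof.
move=> /connectP [p0 p0P ->]; case/shortenP: p0P => p1 p1P p1U _.
suff H : forall n p, size p <= n -> path e u p -> uniq (u :: p) ->
  exists p', [/\ path e u p', last u p' = last u p, uniq (u :: p') & ~~ has (e u) (behead p')].
  have [p' [A B C D]] := H _ p1 (leqnn _) p1P p1U; by exists p'; rewrite B.
elim=> [|n IH] [|x q] //= szp; try by move=> *; exists [::].
- move=> /andP [ux pq] U.
  case h: (has (e u) q); last by exists (x :: q); rewrite /= ux pq h U.
  case/hasP: h => y yq uy.
  case/splitPr: yq pq U szp => q1 q2 pq U szp.
  have [|||p' [A B C D]] := IH (y :: q2).
  + move: szp; rewrite size_cat /= !ltnS => /(leq_trans _); apply; rewrite leq_addl.
  + by [].
  + by rewrite /= uy; move: pq; rewrite cat_path /= => /and3P [].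
  + move: U => /and3P [uN _ U]; rewrite cons_uniq; apply/andP; split.
      by apply: contra uN; rewrite !(in_cons, mem_cat) => /orP [] ->; rewrite !orbT.
    by move: U; rewrite cat_uniq => /and3P [].
  + by exists p'; rewrite B /= last_cat.
Qed.


Lemma deg_swap E x y z : degree E x = 2 -> adj E x y -> ~~ adj E x z ->
  #|z |: (neighbours E x :\ y)| = 2.
Proof.
move=> dx xy xz; move: dx; rewrite /degree (cardsD1 y) cardsU1 !inE xy negb_and xz orbT.
by rewrite add1n => -[->].
Qed.

Lemma adj_neq E x y : simple_graph E -> adj E x y -> x != y.
Proof. by move=> sE H; apply/eqP => xy; subst; have := sE _ H; rewrite setUid cards1. Qed.

End Aux.

Ltac bcase := repeat (match goal with |- context [?z == ?w] => case: (z == w) end);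
  rewrite /= ?orbF ?andbT ?orbT ?andbF //; try by case: (_ \in _).

Theorem lemma3p7 (T : finType) (C : {set {set T}}) (u v : T) :
  cycle_graph C -> u != v -> ~~ adj C u v ->
  exists a b c d : T,
    u_switch C a b c d /\ adj (two_switch C a b c d) u v.
Proof.
move=> cC uv nuv; have [sC [cnC dC]] := cC.
have [p [pP pl pU pH]] := short_path (cnC u v).
case/lastP: p pP pl pU pH => [|p0 w]; first by move=> _ /= eq; rewrite eq eqxx in uv.
rewrite last_rcons => pP wv pU pH; subst w.
case/lastP: p0 pP pU pH => [|r d].
  by rewrite /= andbT => uvadj; rewrite uvadj in nuv.
move=> pP pU pH.
rewrite !rcons_path last_rcons in pP; case/andP: pP => /andP [rP prd] dv.
have rP' : path (adj C) u (rcons r d) by rewrite rcons_path rP prd.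
set pr := last u r in prd.
set P := rcons (rcons r d) v in pU pH.
set x := head u P.
have Pe : P = x :: behead P by rewrite /x /P; case: (rcons r d).
have : 0 < #|neighbours C u :\ x|.
  by move: (dC u); rewrite /degree (cardsD1 x); case: (x \in _); rewrite ?add1n ?add0n; [case=> -> | move=> ->].
case/card_gt0P => b; rewrite !inE => /andP [bx ub].
have bP : b \notin P.
  rewrite Pe inE negb_or bx /=; apply: contra pH => bin; apply/hasP; exists b => //.
move: bP; rewrite /P !(mem_rcons, in_cons) !negb_or => /and3P [bv bd br].
move: pU; rewrite /P /= !rcons_uniq !(mem_rcons, in_cons) !negb_or.
case/and4P => /and3P [uv' ud ur] /andP [vd vr] dr _.
have ubn : u != b := adj_neq sC ub.
have prin : pr \in u :: r := mem_last u r.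
have prb : pr != b.
  by apply: contraTneq prin => ->; rewrite inE negb_or eq_sym ubn.
have prv : pr != v.
  by apply: contraTneq prin => ->; rewrite inE negb_or eq_sym uv.
have nbd : ~~ adj C b d.
  apply/negP => bdadj.
  have := dC d; rewrite /degree (cardsD1 v) (cardsD1 pr (_ :\ v)) (cardsD1 b (_ :\ pr)).
  rewrite !inE -(adjC C b d) bdadj -(adjC C pr d) prd dv prv (eq_sym b) prb bv.
  by [].
have Hint : interchangeable C u b v d.
  split => //; first by rewrite adjC.
  rewrite -setI_eq0; apply/eqP/setP => y; rewrite !inE.
  apply/negbTE; apply/negP => /andP [/orP [] /eqP -> /orP [] /eqP E]; subst.
  - by rewrite eqxx in uv.
  - by rewrite eqxx in ud.
  - by rewrite eqxx in bv.
  - by rewrite eqxx in bd.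
have tsE : two_switch C u b v d = switch_edges C u b v d.
  by rewrite /two_switch (introT and5P Hint).
exists u, b, v, d; rewrite tsE.
have Guv : adj (switch_edges C u b v d) u v.
  by rewrite /adj /switch_edges !inE eqxx orbT.
split => //; split => //.
rewrite tsE; apply: (cycle_unicyclic u).
set G := switch_edges C u b v d.
have vu : v != u by rewrite eq_sym.
have du : d != u by rewrite eq_sym.
have bu : b != u by rewrite eq_sym.
have vb : v != b by rewrite eq_sym.
have db : d != b by rewrite eq_sym.
have dv' : d != v by rewrite eq_sym.
have eqF := (negbTE uv, negbTE ud, negbTE ubn, negbTE bv, negbTE bd, negbTE vd,
             negbTE vu, negbTE du, negbTE bu, negbTE vb, negbTE db, negbTE dv').
split; [|split].
- move=> e; rewrite /G /switch_edges !inE.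
  case/or3P => [/and3P [_ _ /sC] // | /eqP -> | /eqP ->]; by rewrite cards2 ?uv ?bd.
- have symG : symmetric (adj G) by move=> y z; rewrite adjC.
  have ud' : connect (adj G) u d.
    have sub : {in [predC [:: b; v]] &, subrel (adj C) (adj G)}.
      move=> y z; rewrite !inE !negb_or => /andP [yb yv] /andP [zb zv] Cyz.
      rewrite /adj /G /switch_edges !inE !pair_eq -/(adj C y z) Cyz.
      by rewrite (negbTE yb) (negbTE yv) (negbTE zb) (negbTE zv) !andbF.
    have allP' : all [predC [:: b; v]] (u :: rcons r d).
      apply/allP => z; rewrite !(in_cons, mem_rcons) !inE.
      case/or3P => [/eqP -> | /eqP -> | zr]; rewrite ?negb_or ?ubn ?uv ?db ?dv' //.
      by apply/andP; split; apply/eqP => zE; [move: br | move: vr]; rewrite -zE zr.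
    apply: (path_connect (sub_in_path sub allP' rP')).
    by rewrite !(in_cons, mem_rcons) eqxx orbT.
  have key : forall z, z \in [:: u; b; v; d] -> connect (adj G) z u.
    move=> z; rewrite !inE => /or4P [] /eqP ->.
    + exact: connect0.
    + apply: (connect_trans (y := d)); last by rewrite (sym_connect_sym symG).
      apply: connect1; by rewrite /adj /G /switch_edges !inE eqxx !orbT.
    + by apply: connect1; rewrite symG.
    + by rewrite (sym_connect_sym symG).
  have toU : forall z, connect (adj G) z u.
    move=> z; apply: (connect_bwd (e := adj C) (P := fun z => connect (adj G) z u)) (cnC z u).
      move=> y w Cyw Pw; case E: (adj G y w); first exact: connect_trans (connect1 E) Pw.
      apply: key; move: E; rewrite /adj /G /switch_edges !inE !pair_eq -/(adj C y w) Cyw andbT.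
      by case: (y == u); case: (y == b); case: (y == v); case: (y == d); rewrite //= ?andbF ?orbT.
    exact: connect0.
  move=> y z; apply: connect_trans (toU y) _; rewrite (sym_connect_sym symG); exact: toU.
- move=> y; rewrite /degree.
  case: (eqVneq y u) => [->|yu].
    have -> : neighbours G u = v |: (neighbours C u :\ b).
      apply/setP => z; rewrite !inE /adj /G /switch_edges !inE !pair_eq !eqxx !eqF /=.
      by bcase.
    exact: deg_swap (dC u) ub nuv.
  case: (eqVneq y v) => [->|yv].
    have -> : neighbours G v = u |: (neighbours C v :\ d).
      apply/setP => z; rewrite !inE /adj /G /switch_edges !inE !pair_eq !eqxx !eqF /=.
      by bcase.
    by apply: deg_swap (dC v) _ _; rewrite adjC // .
  case: (eqVneq y b) => [->|yb].
    have -> : neighbours G b = d |: (neighbours C b :\ u).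
      apply/setP => z; rewrite !inE /adj /G /switch_edges !inE !pair_eq !eqxx !eqF /=.
      by bcase.
    by apply: deg_swap (dC b) _ nbd; rewrite adjC.
  case: (eqVneq y d) => [->|yd].
    have -> : neighbours G d = b |: (neighbours C d :\ v).
      apply/setP => z; rewrite !inE /adj /G /switch_edges !inE !pair_eq !eqxx !eqF /=.
      by bcase.
    by apply: deg_swap (dC d) dv _; rewrite adjC.
  have -> : neighbours G y = neighbours C y.
    apply/setP => z; rewrite !inE /adj /G /switch_edges !inE !pair_eq.
    rewrite (negbTE yu) (negbTE yv) (negbTE yb) (negbTE yd) /=.
    by bcase.
  exact: dC.
Qed.
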